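(* Let $r\in\mathbb{Z}$, $r\neq1$, and $A_r=\left(\frac{1+x(r-1)}{1-x};\ \frac{1}{(1-x)^2},\ \frac{x}{1-x}\right)$. Then every element of the cyclic subgroup $\{A_r^p:p\in\mathbb{Z}\}$ of the group of almost Riordan arrays of first order is a pseudo-involution.
   Context: All matrices are infinite lower-triangular with rows and columns indexed by $n,k\ge0$ and integer entries. $[x^n]h(x)$ denotes the coefficient of $x^n$ in $h$. An almost Riordan array of first order is a triple $(a;g,f)$ of formal power series with $a_0=1$, $g_0=1$, $f_0=0$, $f_1=1$; its associated matrix $M$ is given by $M_{0,0}=a_0$, $M_{0,k}=0$ for $k\ge1$, $M_{n,0}=a_n$ for $n\ge1$, and $M_{n,k}=[x^{n-1}]\,g(x)f(x)^{k-1}$ for $n,k\ge1$. These matrices form a group under matrix multiplication. $I$ is the identity matrix and $\bar I$ is the diagonal matrix with diagonal $(1,-1,1,-1,\dots)$. An element with matrix $M$ is a pseudo-involution if $(M\bar I)^2=I$. *)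

(* Defs.v *)
From HB Require Import structures.
From mathcomp Require Import all_boot all_order all_algebra.
Set Implicit Arguments. Unset Strict Implicit. Unset Printing Implicit Defensive.
Import Order.TTheory GRing.Theory Num.Theory.
Local Open Scope ring_scope.

(* Formal power series over Z, given by their coefficient sequences. *)
Definition series := nat -> int.

Definition smul (a b : series) : series :=
  fun n => \sum_(i < n.+1) a i * b (n - i)%N.

Definition sone : series := fun n => if n == 0%N then 1 else 0.

Fixpoint spow (f : series) (k : nat) : series :=
  match k with 0%N => sone | k'.+1 => smul f (spow f k') end.

(* 1/(1-x) *)
Definition sgeom : series := fun _ => 1.
Definition sX : series := fun n => if n == 1%N then 1 else 0.
Definition slin (r : int) : series :=
  fun n => if n == 0%N then 1 else if n == 1%N then r - 1 else 0.

Definition mat := nat -> nat -> int.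

(* Matrix associated with the almost Riordan array (a; g, f) *)
Definition ara_mat (a g f : series) : mat :=
  fun n k =>
    if k == 0%N then a n
    else if n == 0%N then 0
    else smul g (spow f k.-1) n.-1.

(* Product of (lower-triangular) infinite matrices: sum over j <= n *)
Definition mmul (M N : mat) : mat :=
  fun n k => \sum_(j < n.+1) M n j * N j k.

Definition mid : mat := fun n k => if n == k then 1 else 0.
Definition mIbar : mat := fun n k => if n == k then (-1) ^+ n else 0.

Fixpoint mpow (M : mat) (p : nat) : mat :=
  match p with 0%N => mid | p'.+1 => mmul M (mpow M p') end.

Definition mat_eq (M N : mat) : Prop := forall n k, M n k = N n k.

Definition lower_tri (M : mat) : Prop := forall n k, (n < k)%N -> M n k = 0.

Definition pseudo_involution (M : mat) : Prop :=
  mat_eq (mmul (mmul M mIbar) (mmul M mIbar)) mid.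

Definition A_r (r : int) : mat :=
  ara_mat (smul (slin r) sgeom) (smul sgeom sgeom) (smul sX sgeom).

(* M belongs to the cyclic subgroup generated by A: M = A^p for p >= 0,
   or M is the (lower-triangular) inverse of A^p, i.e. M = A^(-p). *)
Definition in_cyclic_subgroup (A M : mat) : Prop :=
  exists p : nat, mat_eq M (mpow A p) \/
                  (lower_tri M /\ mat_eq (mmul M (mpow A p)) mid).

(* Main.v *)
Require Import Defs.
From HB Require Import structures.
From mathcomp Require Import all_boot all_order all_algebra.
From Stdlib Require Import FunctionalExtensionality.
From mathcomp Require Import ring.
Import Order.TTheory GRing.Theory Num.Theory.
Local Open Scope ring_scope.

Lemma meqE (M N : mat) : mat_eq M N -> M = N.
Proof. move=> h; apply: functional_extensionality => n; apply: functional_extensionality => k; exact: h. Qed.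

Lemma lt_mul M N : lower_tri M -> lower_tri N -> lower_tri (mmul M N).
Proof.
move=> hM hN n k nk; rewrite /mmul big1 // => j _.
by rewrite hN ?mulr0 // (leq_ltn_trans _ nk) // -ltnS ltn_ord.
Qed.

Lemma lt_mid : lower_tri mid.
Proof. by move=> n k nk; rewrite /mid ltn_eqF. Qed.

Lemma lt_J : lower_tri mIbar.
Proof. by move=> n k nk; rewrite /mIbar ltn_eqF. Qed.

Lemma lt_pow M p : lower_tri M -> lower_tri (mpow M p).
Proof. move=> h; elim: p => [|p IH] /=; [exact: lt_mid| exact: lt_mul]. Qed.

Lemma mul1m N : mmul mid N = N.
Proof.
apply: meqE => n k; rewrite /mmul big_ord_recr /= /mid eqxx mul1r big1 ?add0r //.
by move=> j _; rewrite eq_sym (ltn_eqF (ltn_ord j)) mul0r.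
Qed.

Lemma mulm1 M : lower_tri M -> mmul M mid = M.
Proof.
move=> hM; apply: meqE => n k; rewrite /mmul /mid.
case: (ltnP n k) => nk.
  rewrite hM // big1 // => j _; rewrite ltn_eqF ?mulr0 //.
  by rewrite (leq_ltn_trans _ nk) // -ltnS ltn_ord.
have kn : (k < n.+1)%N by [].
rewrite (bigD1 (Ordinal kn)) //= eqxx mulr1 big1 ?addr0 // => j.
by rewrite -val_eqE /= => /negbTE ->; rewrite mulr0.
Qed.

Lemma mulA M N P : lower_tri N -> mmul (mmul M N) P = mmul M (mmul N P).
Proof.
move=> hN; apply: meqE => n k; rewrite /mmul.
under eq_bigr do rewrite mulr_suml.
rewrite exchange_big /=; apply: eq_bigr => i _; rewrite mulr_sumr.
rewrite (big_ord_widen n.+1 (fun j => M n i * (N i j * P j k))) ?ltn_ord //.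
rewrite [RHS]big_mkcond /=; apply: eq_bigr => j _; rewrite mulrA.
case: ifP => // /negbT; rewrite -leqNgt => h; rewrite hN ?mulr0 ?mul0r //.
Qed.

Lemma mulmJ M : lower_tri M -> mmul M mIbar = fun n k => M n k * (-1) ^+ k.
Proof.
move=> hM; apply: meqE => n k; rewrite /mmul /mIbar.
case: (ltnP n k) => nk.
  rewrite hM // mul0r big1 // => j _; rewrite ltn_eqF ?mulr0 //.
  by rewrite (leq_ltn_trans _ nk) // -ltnS ltn_ord.
have kn : (k < n.+1)%N by [].
rewrite (bigD1 (Ordinal kn)) //= eqxx big1 ?addr0 // => j.
by rewrite -val_eqE /= => /negbTE ->; rewrite mulr0.
Qed.

Lemma JJ : mmul mIbar mIbar = mid.
Proof.
rewrite mulmJ; last exact: lt_J.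
apply: meqE => n k; rewrite /mIbar /mid; case: eqP => [->|]; last by rewrite mul0r.
by rewrite -exprD -signr_odd addnn odd_double.
Qed.

Lemma mpowSr M p : lower_tri M -> mpow M p.+1 = mmul (mpow M p) M.
Proof.
move=> hM; elim: p => [|p IH] /=; first by rewrite mulm1 // mul1m.
rewrite /= in IH *; rewrite [RHS]mulA; last exact: lt_pow. by rewrite -IH.
Qed.

Lemma pow_inv A B p : lower_tri A -> lower_tri B -> mmul A B = mid ->
  mmul (mpow A p) (mpow B p) = mid.
Proof.
move=> hA hB hAB; elim: p => [|p IH]; first by rewrite /= mul1m.
rewrite mpowSr // /= mulA; last by [].
by rewrite -(mulA _ _ _ hB) hAB mul1m IH.
Qed.

Ltac lt := repeat first [apply: lt_mul | apply: lt_pow | apply: lt_J | apply: lt_mid | assumption].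

Lemma key (E : mat) : lower_tri E -> mmul (mmul E mIbar) (mmul E mIbar) = mid ->
  forall M, in_cyclic_subgroup E M -> pseudo_involution M.
Proof.
move=> hE h M [p hM].
set J := mIbar.
have hJ : lower_tri J := lt_J.
have h1 : mmul E (mmul J (mmul E J)) = mid by rewrite -h mulA.
have h2 : mmul J (mmul E (mmul J E)) = mid.
  have e: mmul (mmul J (mmul E (mmul J (mmul E J)))) J = mmul J (mmul E (mmul J E)).
    rewrite mulA; last by lt.
    rewrite mulA; last by lt.
    rewrite mulA; last by lt.
    rewrite mulA //.
    by rewrite JJ mulm1.
  by rewrite -e h1 mulm1 // JJ.
set F := mmul J (mmul E J).
have hF : lower_tri F by rewrite /F; lt.
have hEF : mmul E F = mid by [].
have hFE : mmul F E = mid.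
  rewrite /F mulA; last by lt.
  by rewrite mulA.
have hJEF : mmul J E = mmul F J.
  rewrite /F mulA; last by lt.
  by rewrite mulA // JJ mulm1.
have hJE : forall q, mmul J (mpow E q) = mmul (mpow F q) J.
  elim=> [|q IH] /=; first by rewrite mul1m mulm1.
  rewrite -mulA // hJEF mulA // IH -mulA //; lt.
have pEF := pow_inv _ _ p hE hF hEF.
have pFE := pow_inv _ _ p hF hE hFE.
suff HH : mmul (mmul M J) (mmul M J) = mid by move: HH; rewrite /J => HH n k; rewrite HH.
case: hM => [/meqE ->|[hMl /meqE hM]].
  rewrite mulA; last by lt.
  rewrite -(mulA J); last by lt.
  rewrite hJE mulA; last by lt.
  by rewrite JJ mulm1 //; lt.
have -> : M = mpow F p.
  rewrite -(mulm1 _ hMl) -pEF -mulA; last by lt.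
  by rewrite hM mul1m.
rewrite mulA; last by lt.
rewrite -hJE -(mulA J); last by lt.
by rewrite JJ mul1m.
Qed.
Lemma coef_sign (j : nat) (p : {poly int}) i : ((-1) ^+ j * p)`_i = (-1) ^+ j * p`_i.
Proof.
have -> : (-1) ^+ j = ((-1) ^+ j)%:P :> {poly int} by rewrite rmorphXn rmorphN1.
by rewrite coefCM.
Qed.

Lemma coefX1 j k : (('X + 1) ^+ j : {poly int})`_k = ('C(j, k))%:R.
Proof.
rewrite exprD1n coef_sum.
under eq_bigr do rewrite coefMn coefXn.
case: (ltnP j k) => jk.
  rewrite bin_small // big1 // => i _; rewrite gtn_eqF ?mul0rn //.
  by rewrite (leq_ltn_trans _ jk) // -ltnS ltn_ord.
have kj : (k < j.+1)%N by [].
rewrite (bigD1 (Ordinal kj)) //= eqxx big1 ?addr0 // => i.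
by rewrite -val_eqE /= eq_sym => /negbTE ->; rewrite mul0rn.
Qed.

Lemma binv n k : \sum_(j < n.+1) (-1) ^+ j * ('C(n, j) * 'C(j, k))%:R
  = (-1) ^+ n * (k == n)%:R :> int.
Proof.
have e : (- 'X : {poly int}) ^+ n = \sum_(j < n.+1) (-1) ^+ j * ('X + 1) ^+ j *+ 'C(n, j).
  have -> : (- 'X : {poly int}) = - ('X + 1) + 1 by rewrite opprD subrK.
  by rewrite exprD1n; apply: eq_bigr => j _; rewrite [in LHS]exprNn.
have := congr1 (fun p : {poly int} => p`_k) e.
rewrite [(- 'X) ^+ n]exprNn coef_sign coefXn coef_sum => ->.
apply: eq_bigr => j _; rewrite coefMn coef_sign coefX1 natrM.
by rewrite -mulrnAr -[in RHS]mulr_natl.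
Qed.
Definition S (b : series) : series := fun m => \sum_(t < m) b t.

Lemma smul_sone a m : smul a sone m = a m.
Proof.
rewrite /smul big_ord_recr /= subnn /sone eqxx mulr1 big1 ?add0r // => i _.
by rewrite subn_eq0 leqNgt ltn_ord mulr0.
Qed.

Lemma smulS a b m : smul a (S b) m = S (smul a b) m.
Proof.
elim: m => [|m IH]; first by rewrite /smul /S big_ord1 big_ord0 mulr0 big_ord0.
transitivity (smul a (S b) m + smul a b m); last first.
  by rewrite IH; symmetry; rewrite /S big_ord_recr.
rewrite /smul big_ord_recr /= subnn {2}/S big_ord0 mulr0 addr0 -big_split /=.
apply: eq_bigr => i _; rewrite subSn; last by rewrite -ltnS.
by rewrite /S big_ord_recr /= mulrDr.
Qed.

Lemma geom_l c m : smul sgeom c m = S c m.+1.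
Proof.
elim: m => [|m IH]; first by rewrite /smul /S !big_ord1 mul1r.
rewrite /smul big_ord_recl /= subn0 mul1r.
rewrite /S [RHS]big_ord_recr /= -/(S c m.+1) -IH addrC /smul.
by congr (_ + _); apply: eq_bigr => i _; rewrite /bump /= add1n subSS.
Qed.

Definition sf := smul sX sgeom.

Lemma sfE i : sf i = (i != 0%N)%:R.
Proof.
case: i => [|i]; first by rewrite /sf /smul big_ord1.
rewrite /sf /smul big_ord_recl /= big_ord_recl /= big1 ?addr0 //.
Qed.

Lemma smul_sf c m : smul sf c m = S c m.
Proof.
case: m => [|m]; first by rewrite /smul big_ord1 sfE mul0r /S big_ord0.
rewrite /smul big_ord_recl /= sfE mul0r add0r -geom_l /smul.
by apply: eq_bigr => i _; rewrite sfE /bump /= add1n subSS.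
Qed.

Lemma gE m : smul sgeom sgeom m = (m.+1)%:R.
Proof. by rewrite geom_l /S sumr_const card_ord. Qed.

Lemma hockey m k : S (fun t => ('C(t.+1, k.+1))%:R) m = ('C(m.+1, k.+2))%:R :> int.
Proof.
elim: m => [|m IH]; first by rewrite /S big_ord0 bin_small.
rewrite /S in IH; by rewrite /S big_ord_recr /= IH -natrD [in RHS]binS.
Qed.

Lemma smul_ext a b b' m : (forall n, b n = b' n) -> smul a b m = smul a b' m.
Proof. by move=> h; apply: eq_bigr => i _; rewrite h. Qed.

Lemma Tk k m : smul (smul sgeom sgeom) (spow sf k) m = ('C(m.+1, k.+1))%:R.
Proof.
elim: k m => [|k IH] m /=; first by rewrite smul_sone gE bin1.
rewrite (@smul_ext _ _ _ _ (smul_sf _)) smulS.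
rewrite -hockey /S; apply: eq_bigr => i _; exact: IH.
Qed.

Lemma col0 r n : smul (slin r) sgeom n = if n == 0%N then 1 else r.
Proof.
case: n => [|n]; first by rewrite /smul big_ord1 /slin /sgeom mulr1.
rewrite /smul big_ord_recl big_ord_recl /= big1 ?addr0.
  by rewrite /slin /sgeom /= !mulr1 addrC subrK.
by move=> i _; rewrite /slin /bump /= mul0r.
Qed.

Definition Ex (r : int) : mat := fun n k =>
  if k == 0%N then (if n == 0%N then 1 else r) else ('C(n, k))%:R.

Lemma AE r : forall n k, A_r r n k = Ex r n k.
Proof.
move=> n k; rewrite /A_r /ara_mat /Ex col0.
case: k => [|k] //=; case: n => [|n] //=.
exact: Tk.
Qed.

Lemma Ex_lt r : lower_tri (Ex r).
Proof. by move=> n [|k] nk //; rewrite /Ex /= bin_small. Qed.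

Lemma sgn2 n : (-1) ^+ n * (-1) ^+ n = 1 :> int.
Proof. by rewrite -exprD -signr_odd addnn odd_double. Qed.

Lemma Ex_inv r : mmul (mmul (Ex r) mIbar) (mmul (Ex r) mIbar) = mid.
Proof.
rewrite mulmJ; last exact: Ex_lt.
apply: meqE => n k; rewrite /mmul /mid.
case: k => [|k].
  case: n => [|n]; first by rewrite big_ord1 /Ex /= !mulr1.
  have h := binv n.+1 0.
  rewrite big_ord_recl /= muln1 mulr1 in h.
  rewrite big_ord_recl /= /Ex /= !mulr1.
  have e : \sum_(i < n.+1) ('C(n.+1, bump 0 i))%:R * (-1) ^+ bump 0 i * r
     = (\sum_(i < n.+1) (-1) ^+ bump 0 i * ('C(n.+1, bump 0 i) * 'C(bump 0 i, 0))%:R) * r.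
    rewrite mulr_suml; apply: eq_bigr => i _; by rewrite bin0 muln1 (mulrC (_%:R)).
  rewrite e.
  have -> : \sum_(i < n.+1) (-1) ^+ bump 0 i * ('C(n.+1, bump 0 i) * 'C(bump 0 i, 0))%:R = -1 :> int.
    by move: h; rewrite mulr0 expr0 => h; apply: (addrI 1); rewrite h subrr.
  by rewrite mulN1r subrr.
have e : \sum_(j < n.+1) Ex r n j * (-1) ^+ j * (Ex r j k.+1 * (-1) ^+ k.+1)
   = (\sum_(j < n.+1) (-1) ^+ j * ('C(n, j) * 'C(j, k.+1))%:R) * (-1) ^+ k.+1.
  rewrite mulr_suml; apply: eq_bigr => j _; rewrite /Ex /=.
  case: (nat_of_ord j) => [|j'] /=; first by rewrite bin0n /= muln0 !(mul0r, mulr0).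
  by rewrite natrM; ring.
rewrite e binv.
case: (eqVneq n k.+1) => [->|ne]; first by rewrite mulr1 sgn2.
by rewrite mulr0 mul0r.
Qed.

Theorem mainTheorem4 (r : int) (hr : r != 1) (M : mat) :
  in_cyclic_subgroup (A_r r) M -> pseudo_involution M.
Proof.
have -> : A_r r = Ex r by apply: meqE; exact: AE.
apply: key; [exact: Ex_lt | exact: Ex_inv].
Qed.
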